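(* Let $G$ be a connected chordal graph. Then there exists a spanning cactus subgraph of $G$ with the maximum possible number of edges (among all spanning cactus subgraphs of $G$) in which every cycle has length $3$.
   Context: All graphs are finite, simple and undirected. A graph is chordal if it has no induced cycle of length greater than $3$. A cactus is a connected graph in which every edge lies in at most one cycle. A spanning cactus subgraph of $G$ is a subgraph of $G$ with vertex set $V(G)$ that is a cactus. *)

(* Defs.v *)
From mathcomp Require Import all_boot.
Set Implicit Arguments. Unset Strict Implicit. Unset Printing Implicit Defensive.

Definition simple_graph (T : finType) (e : rel T) :=
  irreflexive e /\ symmetric e.

Definition graph_connected (T : finType) (r : rel T) :=
  forall x y : T, connect r x y.

Definition is_cycle (T : finType) (r : rel T) (c : seq T) :=
  ucycleb r c && (2 < size c).

Definition cycle_edges (T : finType) (c : seq T) : {set {set T}} :=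
  [set [set x; next c x] | x in c].

Definition induced_cycle (T : finType) (e : rel T) (c : seq T) :=
  is_cycle e c /\
  (forall x y, x \in c -> y \in c -> e x y -> (y == next c x) || (x == next c y)).

Definition chordal (T : finType) (e : rel T) :=
  forall c, induced_cycle e c -> size c <= 3.

(* Cactus: connected, and every edge lies in at most one cycle
   (cycles identified with their edge sets). *)
Definition cactus (T : finType) (r : rel T) :=
  graph_connected r /\
  (forall (A : {set T}) c1 c2, is_cycle r c1 -> is_cycle r c2 ->
     A \in cycle_edges c1 -> A \in cycle_edges c2 ->
     cycle_edges c1 = cycle_edges c2).

Definition adj_of (T : finType) (F : {set {set T}}) : rel T :=
  fun x y => (x != y) && ([set x; y] \in F).

Definition edge_subset (T : finType) (e : rel T) (F : {set {set T}}) :=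
  forall A, A \in F -> exists x y, e x y /\ A = [set x; y].

Definition spanning_cactus (T : finType) (e : rel T) (F : {set {set T}}) :=
  edge_subset e F /\ cactus (adj_of F).

(* Main.v *)
Require Import Defs.
From mathcomp Require Import all_boot.
From Stdlib Require Import ClassicalEpsilon.
Set Implicit Arguments. Unset Strict Implicit. Unset Printing Implicit Defensive.


Section Aux.
Variable T : finType.
Implicit Types (F : {set {set T}}) (c s : seq T).

Lemma set2_eq (a b x y : T) : [set a; b] = [set x; y] ->
  (a = x /\ b = y) \/ (a = y /\ b = x).
Proof.
move=> H.
have ha : a \in [set x; y] by rewrite -H set21.
have hb : b \in [set x; y] by rewrite -H set22.
have hx : x \in [set a; b] by rewrite H set21.
have hy : y \in [set a; b] by rewrite H set22.
rewrite !in_set2 in ha hb hx hy.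
case/orP: ha => /eqP ha; case/orP: hb => /eqP hb; subst.
- by left; split=> //; move: hy; rewrite orbb => /eqP.
- by left.
- by right.
- by left; split=> //; move: hx; rewrite orbb => /eqP.
Qed.

Lemma adj_sym F : symmetric (adj_of F).
Proof. by move=> x y; rewrite /adj_of eq_sym setUC. Qed.

Lemma cycle_edgesP c E :
  reflect (exists2 z, z \in c & E = [set z; next c z]) (E \in cycle_edges c).
Proof. exact: imsetP. Qed.

Lemma cycle_edges_F F c E : cycle (adj_of F) c -> E \in cycle_edges c -> E \in F.
Proof.
move=> cy /cycle_edgesP[z zc ->].
by have /andP[_ ->] := next_cycle cy zc.
Qed.

Lemma cycle_edges_sub c E z : E \in cycle_edges c -> z \in E -> z \in c.
Proof.
case/cycle_edgesP=> w wc ->; rewrite in_set2 => /orP[]/eqP->//.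
by rewrite mem_next.
Qed.

Lemma cycle_edges_rot n c : uniq c -> cycle_edges (rot n c) = cycle_edges c.
Proof.
move=> u; apply/setP=> E; apply/cycle_edgesP/cycle_edgesP=> -[z zc ->].
  by exists z; rewrite ?mem_rot ?next_rot // -(mem_rot n).
by exists z; rewrite ?mem_rot ?next_rot.
Qed.

Lemma cycle_edges_rev c : uniq c -> cycle_edges (rev c) = cycle_edges c.
Proof.
move=> u; apply/setP=> E; apply/cycle_edgesP/cycle_edgesP=> -[z zc ->].
  rewrite mem_rev in zc; rewrite next_rev //.
  exists (prev c z); first by rewrite mem_prev.
  by rewrite next_prev // setUC.
exists (next c z); first by rewrite mem_rev mem_next.
by rewrite next_rev // prev_next // setUC.
Qed.

Lemma is_cycle_rot (r : rel T) n c : is_cycle r (rot n c) = is_cycle r c.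
Proof. by rewrite /is_cycle /ucycleb rot_cycle rot_uniq size_rot. Qed.

Lemma next_head (a b : T) s : next [:: a, b & s] a = b.
Proof. by rewrite /next /= eqxx. Qed.

Lemma next_lastE (a : T) s : uniq (a :: s) -> next (a :: s) (last a s) = a.
Proof.
move=> u; rewrite next_nth mem_last index_last //.
by rewrite nth_default.
Qed.

Lemma next_idx (h : T) L z : uniq (h :: L) -> z \in h :: L -> z != last h L ->
  index (next (h :: L) z) (h :: L) = (index z (h :: L)).+1.
Proof.
move=> u zin zl; rewrite next_nth zin.
have hi : index z (h :: L) < size L.
  have := zin; rewrite -index_mem [size _]/= ltnS leq_eqVlt => /orP[/eqP e|//].
  case/eqP: zl; by rewrite (last_nth h) -e nth_index.
have -> : nth h L (index z (h :: L)) = nth h (h :: L) (index z (h :: L)).+1 by [].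
by rewrite index_uniq.
Qed.


Lemma path_interior (r : rel T) (a : T) (t : seq T) b : path r a (t ++ [:: b]) -> t != [::] ->
  path (fun p q => r p q && ((p \in t) || (q \in t))) a (t ++ [:: b]).
Proof.
elim: t a => // u t IH a /= /andP[rau pt] _.
rewrite rau mem_head orbT /=.
case: t IH pt => [|v t] IH pt.
  by move: pt => /= /andP[-> _]; rewrite inE eqxx.
apply: sub_path (IH _ pt isT) => p q /andP[-> /orP[] H] /=;
  apply/orP; [left|right]; by rewrite in_cons H orbT.
Qed.

Lemma adj_del F A p q : adj_of F p q -> [set p; q] != A -> adj_of (F :\ A) p q.
Proof. by rewrite /adj_of in_setD1 => /andP[-> ->] ->. Qed.

Lemma not_edge_of_interior (a h p q : T) (t : seq T) :
  a \notin t -> h \notin t -> (p \in t) || (q \in t) -> [set p; q] != [set a; h].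
Proof.
move=> ant ht pq; apply/eqP=> /set2_eq [[ep eq]|[ep eq]]; subst; move: pq;
  by rewrite (negPf ant) (negPf ht).
Qed.

Lemma conn_remove F (a h : T) (t : seq T) : graph_connected (adj_of F) ->
  uniq [:: a, h & t] -> cycle (adj_of F) [:: a, h & t] -> t != [::] ->
  graph_connected (adj_of (F :\ [set a; h])).
Proof.
move=> conn u cy tn.
set G := adj_of (F :\ [set a; h]).
have symG : connect_sym G by apply: sym_connect_sym; apply: adj_sym.
have ha : connect G h a.
  move: cy => /= /andP[_ p1].
  have p2 : path (adj_of F) h (t ++ [:: a]) by rewrite cats1.
  move: u; rewrite /= !inE negb_or => /andP[/andP[_ ant] /andP[ht _]].
  have p3 : path G h (t ++ [:: a]).
    apply: sub_path (path_interior p2 tn) => p q /andP[apq H].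
    exact: adj_del apq (not_edge_of_interior ant ht H).
  have := path_connect p3 (mem_last h (t ++ [:: a])).
  by rewrite last_cat.
have H : subrel (adj_of F) (connect G).
  move=> p q apq; case: (boolP ([set p; q] == [set a; h])) => [/eqP|] E.
    case/set2_eq: E => -[-> ->] //; by rewrite symG.
  exact/connect1/adj_del.
by move=> x y; apply: connect_sub H _ _ (conn x y).
Qed.

End Aux.


Section Cac.
Variable T : finType.
Implicit Types (F : {set {set T}}) (c s : seq T).

Definition cycprop F := forall (A : {set T}) c1 c2,
  is_cycle (adj_of F) c1 -> is_cycle (adj_of F) c2 ->
  A \in cycle_edges c1 -> A \in cycle_edges c2 ->
  cycle_edges c1 = cycle_edges c2.

Lemma noexc F c (a z : T) (Q : seq T) : cycprop F ->
  is_cycle (adj_of F) c -> a \in c -> z \in c ->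
  all (fun q => q \notin c) Q -> path (adj_of F) a (rcons Q z) ->
  uniq (a :: rcons Q z) ->
  (Q != [::]) || ([set a; z] \notin cycle_edges c) -> False.
Proof.
move=> cp cyc ac zc allQ pQ uQ H.
have /andP[/andP[cc uc] szc] := cyc.
have za : z != a.
  by apply/eqP=> e; move: uQ; rewrite /= e mem_rcons mem_head.
have uQ' : uniq Q by move: uQ => /= /andP[_]; rewrite rcons_uniq => /andP[].
case/rot_to: ac => i t ct.
have zt : z \in t by move: zc; rewrite -(mem_rot i) ct inE (negPf za).
move: ct; case/splitPr: zt => t1 t2 ct.
have uc' : uniq (a :: t1 ++ z :: t2) by rewrite -ct rot_uniq.
have cc' : cycle (adj_of F) (a :: t1 ++ z :: t2) by rewrite -ct rot_cycle.
have memc' : forall w, (w \in c) = (w \in a :: t1 ++ z :: t2).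
  by move=> w; rewrite -ct mem_rot.
set D := a :: t1 ++ z :: rev Q.
have DE : D = (a :: t1 ++ [:: z]) ++ rev Q by rewrite /D /= -catA.
have uD : uniq D.
  rewrite DE cat_uniq rev_uniq uQ' andbT; apply/andP; split.
    by move: uc'; rewrite -[z :: t2]/([:: z] ++ t2) catA -cat_cons cat_uniq => /andP[].
  apply/hasPn=> q; rewrite mem_rev => qQ.
  have qc : q \notin c by move/allP: allQ; apply.
  apply: contra qc; rewrite memc' !inE !mem_cat !inE => /orP[->|/orP[->|->]];
    by rewrite ?orbT.
have cD : cycle (adj_of F) D.
  rewrite /D /= -cats1 -catA /= cats1.
  have -> : t1 ++ z :: rcons (rev Q) a = (t1 ++ [:: z]) ++ rcons (rev Q) a
    by rewrite -catA.
  rewrite cat_path last_cat /=; apply/andP; split.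
    move: cc'; rewrite /= -cats1 -catA.
    have -> : t1 ++ (z :: t2) ++ [:: a] = (t1 ++ [:: z]) ++ (t2 ++ [:: a])
      by rewrite -catA.
    by rewrite (cat_path _ _ (t1 ++ [:: z])) => /andP[].
  have := rev_path (adj_of F) a (rcons Q z).
  rewrite last_rcons belast_rcons rev_cons => ->.
  by apply: etrans pQ; apply: eq_path => u v; rewrite adj_sym.
have nDa : next D a = next c a.
  rewrite -(next_rot i uc) ct /D.
  by case: (t1) => [|b t1']; rewrite ?cat0s ?cat_cons !next_head.
have Ac : [set a; next c a] \in cycle_edges c.
  by apply/cycle_edgesP; exists a => //; rewrite memc' mem_head.
have AD : [set a; next c a] \in cycle_edges D.
  by apply/cycle_edgesP; exists a; rewrite ?mem_head ?nDa.
have [Qe|[q [Q' Qe]]] : Q = [::] \/ exists q Q', Q = q :: Q'.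
  by case: (Q) => [|q Q']; [left|right; exists q, Q'].
- subst Q; rewrite eqxx /= in H.
  have t1n : t1 != [::].
    apply: contraTneq H => t1e; rewrite negbK.
    suff <- : next c a = z by [].
    by rewrite -(next_rot i uc) ct t1e next_head.
  have sD : 2 < size D.
    by rewrite /D /= size_cat /= addn1 !ltnS lt0n size_eq0.
  have cyD : is_cycle (adj_of F) D by rewrite /is_cycle /ucycleb cD uD sD.
  have eD := cp _ _ _ cyD cyc AD Ac.
  have : [set z; next D z] \in cycle_edges D.
    by apply/cycle_edgesP; exists z => //; rewrite /D !inE mem_cat !inE eqxx !orbT.
  have -> : next D z = a.
    have := next_lastE uD; rewrite /D /= last_cat /=.
    by [].
  by rewrite eD setUC (negPf H).
- subst Q; have sD : 2 < size D.
    by rewrite /D /= size_cat /= size_rev /= !addnS.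
  have cyD : is_cycle (adj_of F) D by rewrite /is_cycle /ucycleb cD uD sD.
  have eD := cp _ _ _ cyD cyc AD Ac.
  have qD : q \in D by rewrite /D !inE mem_cat !inE mem_rev mem_head !orbT.
  have : [set q; next D q] \in cycle_edges D by apply/cycle_edgesP; exists q.
  rewrite eD => /cycle_edges_sub /(_ (set21 _ _)).
  by move: allQ => /= /andP[/negPf ->].
Qed.


Lemma exc F c (s Q : seq T) (a : T) : cycprop F ->
  is_cycle (adj_of F) c -> a \in c -> all (fun q => q \notin c) Q -> Q != [::] ->
  path (adj_of F) a (Q ++ s) -> uniq (a :: Q ++ s) -> last a (Q ++ s) \in c ->
  False.
Proof.
move=> cp cyc ac; elim: s Q => [|z s IH] Q allQ Qn pQ uQ lQ.
  case: Q allQ Qn lQ {pQ uQ} => [|q Q'] //= /andP[qc allQ] _.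
  rewrite cats0 => lQ.
  have := mem_last q Q'; rewrite inE => /orP[/eqP e|lq].
    by rewrite -e lQ in qc.
  by move/allP: allQ => /(_ _ lq); rewrite lQ.
case: (boolP (z \in c)) => zc.
  apply: (noexc (Q := Q) cp cyc ac zc allQ) => //.
  - by move: pQ; rewrite -cat_rcons cat_path => /andP[].
  - by move: uQ; rewrite -cat_rcons -cat_cons cat_uniq => /andP[].
  - by rewrite Qn.
apply: (IH (rcons Q z)); rewrite ?cat_rcons //.
- by rewrite all_rcons zc.
- by case: (Q).
Qed.

Lemma walkC F c (s : seq T) (a : T) : cycprop F ->
  is_cycle (adj_of F) c -> a \in c -> path (adj_of F) a s -> uniq (a :: s) ->
  last a s \in c ->
  path (fun p q => adj_of F p q && ([set p; q] \in cycle_edges c)) a s.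
Proof.
move=> cp cyc; elim: s a => // q s IH a ac /= /andP[aq ps] u l.
case: (boolP (q \in c)) => qc.
  case: (boolP ([set a; q] \in cycle_edges c)) => H.
    rewrite /= aq ?H /=; apply: IH => //; by move: u => /= /andP[].
  exfalso; apply: (noexc (Q := [::]) cp cyc ac qc) => //=.
  - by rewrite aq.
  - by move: u; rewrite /= !inE negb_or => /and3P[/andP[-> _] _ _].
exfalso; apply: (exc (s := s) (Q := [:: q]) cp cyc ac) => //=.
- by rewrite qc.
- by rewrite aq.
Qed.

End Cac.


Section Line.
Variable T : finType.

Definition lr (L : seq T) : rel T := fun p q =>
  (p \in L) && (q \in L) &&
  ((index q L == (index p L).+1) || (index p L == (index q L).+1)).

Lemma lr_sym L : symmetric (lr L).
Proof. by move=> p q; rewrite /lr; case: (p \in L); case: (q \in L); rewrite /= 1?orbC. Qed.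

Lemma ivt L i (q : T) s : path (lr L) q s -> index q L < i ->
  i <= index (last q s) L -> exists2 w, w \in q :: s & index w L = i.
Proof.
elim: s q => [|r s IH] q /=.
  by move=> _ h1 h2; have := leq_ltn_trans h2 h1; rewrite ltnn.
move=> /andP[/andP[_ H] ps] h1 h2.
case: (ltnP (index r L) i) => h.
  case: (IH r ps h h2) => w wi wE; exists w => //; by rewrite inE wi orbT.
exists r; first by rewrite !inE eqxx orbT.
case/orP: H => /eqP H; apply/eqP; rewrite eqn_leq h andbT.
  by rewrite H.
by rewrite H in h1; apply: ltnW; apply: leq_ltn_trans h1.
Qed.

Lemma drop_last_idx (h : T) L : drop (size L) (h :: L) = [:: last h L].
Proof.
by rewrite lastI -cats1 drop_size_cat // size_belast.
Qed.

Lemma line (L : seq T) (x0 a : T) s : uniq L -> path (lr L) a s ->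
  uniq (a :: s) -> a \in L -> last a s = last x0 L ->
  a :: s = drop (index a L) L.
Proof.
move=> uL; elim: s a => [|q s IH] a.
  move=> _ _ aL /= la.
  case: L uL aL la => [|h L] // uL aL la.
  have -> : a = last h L by rewrite la.
  by rewrite index_last // drop_last_idx.
move=> /= /andP[alq ps] /andP[aqs uqs] aL la.
have aLs : index a L < size L by rewrite index_mem.
move: (alq); rewrite /lr => /andP[/andP[_ qL] /orP[] /eqP H].
  have := IH q ps uqs qL la; rewrite H => ->.
  by rewrite (drop_nth a aLs) nth_index.
exfalso.
have hq : index q L < index a L by rewrite H.
have hl : index a L <= index (last q s) L.
  rewrite la; case: L uL aL aLs {H hq qL alq la IH ps} => [|h L] // uL aL aLs.
  have -> : last x0 (h :: L) = last h L by [].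
  by rewrite index_last // -ltnS.
case: (ivt ps hq hl) => w wi wE.
have wL : w \in L by rewrite -index_mem wE.
have ew : w = a by rewrite -(nth_index a wL) wE nth_index.
by rewrite -ew wi in aqs.
Qed.

End Line.


Section Exch.
Variable T : finType.
Variable F : {set {set T}}.
Variables (x y v : T) (s1 s2' : seq T).
Hypothesis cp : cycprop F.
Let c := x :: s1 ++ y :: v :: s2'.
Hypothesis cyc : is_cycle (adj_of F) c.
Hypothesis s1n : s1 != [::].

Let C1 := x :: s1 ++ [:: y].
Let L := v :: s2' ++ x :: s1 ++ [:: y].
Let uv := [set y; v].
Let l := last v s2'.
Let w2 := [set l; x].
Let xy := [set x; y].
Let F' := xy |: (F :\ uv).

Lemma uc : uniq c. Proof. by case/andP: cyc => /andP[]. Qed.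
Lemma ccyc : cycle (adj_of F) c. Proof. by case/andP: cyc => /andP[]. Qed.

Lemma cE : c = C1 ++ v :: s2'. Proof. by rewrite /c /C1 /= -catA. Qed.
Lemma LE : L = rot (size C1) c. Proof. by rewrite cE rot_size_cat /L /C1. Qed.

Lemma uL : uniq L. Proof. by rewrite LE rot_uniq uc. Qed.
Lemma uC1 : uniq C1. Proof. by have := uc; rewrite cE cat_uniq => /andP[]. Qed.

Lemma disj w : w \in v :: s2' -> w \notin C1.
Proof.
move=> ws; have := uc; rewrite cE cat_uniq => /and3P[_ /hasPn H _].
exact: H.
Qed.

Lemma memL w : (w \in L) = (w \in c).
Proof. by rewrite LE mem_rot. Qed.

Lemma memc w : (w \in c) = (w \in C1) || (w \in v :: s2').
Proof. by rewrite cE mem_cat. Qed.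

Lemma nextL w : next L w = next c w.
Proof. by rewrite LE next_rot // uc. Qed.

Lemma lastL : last v (s2' ++ x :: s1 ++ [:: y]) = y.
Proof. by rewrite last_cat /= last_cat. Qed.

Lemma next_y : next c y = v.
Proof. by rewrite -nextL -{1}lastL next_lastE // uL. Qed.

Lemma last_c : last x (s1 ++ y :: v :: s2') = l.
Proof. by rewrite last_cat /=. Qed.

Lemma next_l : next c l = x.
Proof. by rewrite -last_c next_lastE // uc. Qed.

Lemma y_s1 : y \notin s1.
Proof.
have := uC1; rewrite /C1 /= cat_uniq => /andP[_ /and3P[_ H _]].
by apply: contra H => ys; rewrite /= ys.
Qed.

Lemma next_x : next c x \in s1.
Proof.
have [b [s sE]] : exists b s, s1 = b :: s by case: (s1) s1n => // b s; exists b, s.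
by rewrite /c sE cat_cons next_head mem_head.
Qed.

Lemma xy_not : xy \notin cycle_edges c.
Proof.
apply/negP => /cycle_edgesP[z zc /set2_eq[[e1 e2]|[e1 e2]]].
  have := next_x; rewrite e1 -e2 => ys.
  by move: y_s1; rewrite ys.
rewrite -e2 next_y in e1.
have := disj (mem_head v s2'); by rewrite -e1 mem_head.
Qed.

Lemma uv_in : uv \in cycle_edges c.
Proof. apply/cycle_edgesP; exists y; rewrite ?next_y //. by rewrite /c !inE mem_cat !inE eqxx !orbT. Qed.

Lemma w2_in : w2 \in cycle_edges c.
Proof.
apply/cycle_edgesP; exists l; rewrite ?next_l //.
by rewrite -last_c mem_last.
Qed.

Lemma xy_neq : x != y.
Proof.
have := uC1; rewrite /C1 /= mem_cat !inE negb_or => /andP[/andP[_ H] _].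
by [].
Qed.

Lemma uv_w2 : uv != w2.
Proof.
apply/eqP => /set2_eq [[e1 _]|[e1 _]].
  have : l \in v :: s2' by rewrite mem_last.
  by rewrite -e1 => /disj; rewrite /C1 !inE mem_cat !inE eqxx !orbT.
by move/eqP: xy_neq; rewrite e1.
Qed.


Lemma xc : x \in c. Proof. by rewrite /c mem_head. Qed.
Lemma yc : y \in c. Proof. by rewrite /c !inE mem_cat !inE eqxx !orbT. Qed.
Lemma xC1 : x \in C1. Proof. by rewrite /C1 mem_head. Qed.
Lemma l_s2 : l \in v :: s2'. Proof. exact: mem_last. Qed.

Lemma xy_notF : xy \notin F.
Proof.
apply/negP => H.
apply: (noexc (Q := [::]) cp cyc xc yc) => //=.
- by rewrite /adj_of xy_neq H.
- by rewrite !inE xy_neq.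
- exact: xy_not.
Qed.

Lemma uv_inF : uv \in F. Proof. exact: cycle_edges_F ccyc uv_in. Qed.

Lemma cardF' : #|F'| = #|F|.
Proof.
rewrite /F' cardsU1 in_setD1 (negPf xy_notF) andbF /=.
by rewrite (cardsD1 uv F) uv_inF.
Qed.

Lemma conv p q : [set p; q] \in cycle_edges c -> [set p; q] != uv -> lr L p q.
Proof.
case/cycle_edgesP => z zc E ne.
have zy : z != y.
  by apply: contraNneq ne => zy; rewrite E zy next_y.
have H : lr L z (next c z).
  have zL : z \in L by rewrite memL.
  have nL : next c z \in L by rewrite memL mem_next.
  have idx : index (next c z) L = (index z L).+1.
    rewrite -nextL; apply: next_idx; rewrite ?lastL //. all: try exact: uL. all: try exact: zL.
  by rewrite /lr zL nL idx eqxx.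
case/set2_eq: E => -[-> ->] //; by rewrite lr_sym.
Qed.

Lemma nextC1 z : z \in x :: s1 -> next C1 z = next c z.
Proof.
move=> zin.
have zC1 : z \in C1 by rewrite /C1 -cat_cons mem_cat zin.
have zc : z \in c by rewrite /c -cat_cons mem_cat zin.
rewrite !next_nth zC1 zc /C1 /c.
have idx : forall w, index z (x :: s1 ++ w) = index z (x :: s1).
  by move=> w; rewrite -cat_cons index_cat zin.
have hi : index z (x :: s1) <= size s1.
  by rewrite -ltnS; have := zin; rewrite -index_mem.
rewrite !idx !nth_cat; case: ifP => // h.
move: hi; rewrite leq_eqVlt h orbF => /eqP ->.
by rewrite subnn.
Qed.

Lemma C1edges E : E \in cycle_edges C1 ->
  E = xy \/ [/\ E \in cycle_edges c, E != uv & E != w2].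
Proof.
case/cycle_edgesP => z zC1 ->.
case: (eqVneq z y) => [->|zy].
  left; have := next_lastE uC1; rewrite /C1 last_cat /= => ->.
  by rewrite /xy setUC.
have zin : z \in x :: s1.
  by move: zC1; rewrite /C1 -cat_cons mem_cat mem_seq1 (negPf zy) orbF.
have nC1 : next C1 z \in C1 by rewrite mem_next.
right; rewrite nextC1 //; split.
- apply/cycle_edgesP; exists z => //.
  by rewrite /c -cat_cons mem_cat zin.
- apply/eqP => /set2_eq [[e1 _]|[e1 _]]; first by rewrite e1 eqxx in zy.
  by have := disj (mem_head v s2'); rewrite -e1 zC1.
- rewrite -nextC1 // in nC1 *.
  apply/eqP => /set2_eq [[e1 _]|[_ e2]].
    by have := disj l_s2; rewrite -e1 zC1.
  by have := disj l_s2; rewrite -e2 nC1.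
Qed.


Lemma adjF'_del p q : adj_of F' p q -> [set p; q] != xy -> adj_of (F :\ uv) p q.
Proof.
by rewrite /adj_of /F' in_setU1 => /andP[-> /orP[/eqP->|->]] //; rewrite eqxx.
Qed.

Lemma adj_del_F p q : adj_of (F :\ uv) p q -> adj_of F p q.
Proof. by rewrite /adj_of in_setD1 => /andP[-> /andP[_ ->]]. Qed.

Lemma xL : x \in L. Proof. by rewrite memL xc. Qed.

Lemma drop_xL : drop (index x L) L = x :: s1 ++ [:: y].
Proof.
have xs : x \notin v :: s2'.
  by apply: contraL xC1 => H; apply: disj.
rewrite /L -cat_cons index_cat (negPf xs) /= eqxx addn0 drop_size_cat //.
Qed.

Lemma lastL' : last v L = y.
Proof. by rewrite /L /= lastL. Qed.

Lemma K D : is_cycle (adj_of F') D -> xy \in cycle_edges D ->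
  cycle_edges D = cycle_edges C1.
Proof.
move=> cyD /cycle_edgesP [z zD E].
have /andP[/andP[cD uD] sD] := cyD.
case/rot_to: zD => j tD rE.
have sz : 2 < size (z :: tD) by rewrite -rE size_rot.
case: tD rE sz => [|w t'] rE sz; first by [].
have nz : next D z = w by rewrite -(next_rot j uD) rE next_head.
rewrite nz in E.
have t'n : t' != [::] by case: (t') sz.
have u' : uniq [:: z, w & t'] by rewrite -rE rot_uniq.
have c' : cycle (adj_of F') [:: z, w & t'] by rewrite -rE rot_cycle.
have p1 : path (adj_of F') w (t' ++ [:: z]).
  by move: c' => /= /andP[_]; rewrite cats1.
have znt : z \notin t'.
  by move: u'; rewrite /= !inE negb_or => /and3P[/andP[_ ->]].
have wnt : w \notin t' by move: u' => /= /andP[_ /andP[-> _]].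
have p2 : path (adj_of (F :\ uv)) w (t' ++ [:: z]).
  apply: sub_path (path_interior p1 t'n) => p q /andP[a H].
  by apply: (adjF'_del a); rewrite E; exact: not_edge_of_interior znt wnt H.
have p3 : path (adj_of F) w (t' ++ [:: z]) by apply: sub_path p2; exact: adj_del_F.
have uw : uniq (w :: t' ++ [:: z]).
  by move: u'; rewrite -(rot_uniq 1) rot1_cons /= cats1.
have [zc wc] : z \in c /\ w \in c.
  by case/set2_eq: E => -[<- <-]; rewrite xc yc.
have lw : last w (t' ++ [:: z]) = z by rewrite last_cat.
have lc : last w (t' ++ [:: z]) \in c by rewrite lw.
have p4 := walkC cp cyc wc p3 uw lc.
have p5 : path (lr L) w (t' ++ [:: z]).
  have : path [rel a b | adj_of (F :\ uv) a b &&
                         (adj_of F a b && ([set a; b] \in cycle_edges c))] w (t' ++ [:: z])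
    by rewrite path_relI p2 p4.
  apply: sub_path => p q /= /andP[h1 /andP[_ h2]].
  apply: (conv h2); move: h1; rewrite /adj_of in_setD1; case/andP=> _; by case/andP.
rewrite -[cycle_edges D](cycle_edges_rot j uD) rE.
clear nz; case/set2_eq: E => -[e1 e2]; subst z w.
-
  have p6 : path (lr L) x (rev t' ++ [:: y]).
    have := rev_path (lr L) y (t' ++ [:: x]).
    rewrite lw cats1 belast_rcons rev_cons -cats1 => ->.
    by apply: etrans p5; rewrite cats1; apply: eq_path => a b; rewrite lr_sym.
  have u6 : uniq (x :: rev t' ++ [:: y]).
    have -> : x :: rev t' ++ [:: y] = rev (y :: t' ++ [:: x]) by rewrite rev_cons rev_cat /= cats1.
    by rewrite rev_uniq.
  have := line (x0 := v) uL p6 u6 xL; rewrite lastL' last_cat /= => /(_ erefl).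
  rewrite drop_xL => -[] eq0.
  have et : rev t' = s1 by apply: (@rcons_injl _ y); rewrite -!cats1.
  have -> : [:: x, y & t'] = rev (rot 1 C1).
    by rewrite /C1 rot1_cons rev_rcons rev_cat /= -et revK.
  by rewrite cycle_edges_rev ?rot_uniq ?uC1 // cycle_edges_rot // uC1.
- have := line (x0 := v) uL p5 uw xL; rewrite lw lastL' => /(_ erefl).
  rewrite drop_xL => -[] eq0.
  have et : t' = s1 by apply: (@rcons_injl _ y); rewrite -!cats1.
  have -> : [:: y, x & t'] = rot (size (x :: s1)) C1.
    by rewrite /C1 -cat_cons rot_size_cat et.
  by rewrite cycle_edges_rot // uC1.
Qed.


Lemma F'cyc_no D : is_cycle (adj_of F') D -> xy \notin cycle_edges D ->
  is_cycle (adj_of F) D /\ (forall E, E \in cycle_edges D -> E \in F :\ uv).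
Proof.
move=> cyD nxy; have /andP[/andP[cD uD] sD] := cyD.
have H : forall E, E \in cycle_edges D -> E \in F :\ uv.
  move=> E ED; have := cycle_edges_F cD ED; rewrite /F' in_setU1 => /orP[/eqP e|//].
  by rewrite -e ED in nxy.
split=> //; rewrite /is_cycle /ucycleb uD sD !andbT.
apply: (cycle_from_next uD) => p pD.
have a := next_cycle cD pD.
apply: adj_del_F; apply: (adjF'_del a).
apply: contraNneq nxy => <-; apply/cycle_edgesP; by exists p.
Qed.

Lemma cpF' : cycprop F'.
Proof.
have uvn : uv \notin F :\ uv by rewrite in_setD1 eqxx.
move=> A D1 D2 cy1 cy2 A1 A2.
case: (boolP (xy \in cycle_edges D1)) => h1; case: (boolP (xy \in cycle_edges D2)) => h2.
- by rewrite (K cy1 h1) (K cy2 h2).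
- have [cyF2 sub2] := F'cyc_no cy2 h2.
  move: A1; rewrite (K cy1 h1) => /C1edges [eA|[Ac _ _]].
    by rewrite -eA A2 in h2.
  have e := cp cyF2 cyc A2 Ac.
  have uD0 : uv \in cycle_edges D2 by rewrite e uv_in.
  by have := sub2 _ uD0; rewrite (negPf uvn).
- have [cyF1 sub1] := F'cyc_no cy1 h1.
  move: A2; rewrite (K cy2 h2) => /C1edges [eA|[Ac _ _]].
    by rewrite -eA A1 in h1.
  have e := cp cyF1 cyc A1 Ac.
  have uD0 : uv \in cycle_edges D1 by rewrite e uv_in.
  by have := sub1 _ uD0; rewrite (negPf uvn).
- have [cyF1 _] := F'cyc_no cy1 h1.
  have [cyF2 _] := F'cyc_no cy2 h2.
  exact: cp cyF1 cyF2 A1 A2.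
Qed.

Lemma connF' : graph_connected (adj_of F) -> graph_connected (adj_of F').
Proof.
move=> conn.
have rE : rot (size (x :: s1)) c = [:: y, v & s2' ++ x :: s1].
  by rewrite /c -cat_cons rot_size_cat.
have := @conn_remove T F y v (s2' ++ x :: s1) conn.
rewrite -rE rot_uniq rot_cycle uc ccyc => /(_ isT isT).
have -> : (s2' ++ x :: s1 != [::]) = true by case: (s2').
move=> /(_ isT) conn2 p q.
apply: connect_sub (conn2 p q) => a b h.
apply: connect1; move: h; rewrite /adj_of /F' => /andP[-> h] /=.
by rewrite in_setU1 h orbT.
Qed.

Lemma cyc_bound D E : is_cycle (adj_of F') D -> E \in cycle_edges D ->
  E = xy \/ [/\ exists D', is_cycle (adj_of F) D' /\ E \in cycle_edges D',
                 E != uv & E != w2].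
Proof.
have uvn : uv \notin F :\ uv by rewrite in_setD1 eqxx.
move=> cyD ED.
case: (boolP (xy \in cycle_edges D)) => h.
  move: ED; rewrite (K cyD h) => /C1edges [->|[Ec n1 n2]]; first by left.
  by right; split=> //; exists c.
have [cyF sub] := F'cyc_no cyD h.
right; split.
- by exists D.
- by apply: contraNneq uvn => eE; rewrite -{1}eE; apply: sub.
- apply/eqP => eE; rewrite eE in ED.
  have e := cp cyF cyc ED w2_in.
  have uD0 : uv \in cycle_edges D by rewrite e uv_in.
  by have := sub _ uD0; rewrite (negPf uvn).
Qed.

End Exch.


Section Main.
Variable T : finType.
Implicit Types (F : {set {set T}}) (c s : seq T).

Definition cb (P : Prop) : bool :=
  if excluded_middle_informative P then true else false.

Lemma cbP P : reflect P (cb P).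
Proof. by rewrite /cb; case: excluded_middle_informative => h; constructor. Qed.

Definition oncyc F (E : {set T}) :=
  cb (exists D, is_cycle (adj_of F) D /\ E \in cycle_edges D).
Definition cycset F := [set E in F | oncyc F E].

Lemma exchange (e : rel T) F (x y v : T) s1 s2' :
  spanning_cactus e F -> e x y ->
  is_cycle (adj_of F) (x :: s1 ++ y :: v :: s2') -> s1 != [::] ->
  exists F', [/\ spanning_cactus e F', #|F'| = #|F| & #|cycset F'| < #|cycset F|].
Proof.
move=> [esub [conn cp]] exy cyc s1n.
set uv := [set y; v]; set w2 := [set last v s2'; x]; set xy := [set x; y].
exists (xy |: F :\ uv); split.
- rewrite /spanning_cactus /cactus; split; [|split].
  + move=> A; rewrite in_setU1 => /orP[/eqP ->|]; first by exists x, y.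
    by rewrite in_setD1 => /andP[_ /esub].
  + exact: connF' cyc conn.
  + exact: cpF' cp cyc.
- exact: cardF' cp cyc s1n.
have uvc : uv \in cycset F.
  rewrite inE (uv_inF cyc); apply/cbP; exists (x :: s1 ++ y :: v :: s2').
  by split=> //; apply: uv_in cyc.
have w2c : w2 \in cycset F :\ uv.
  rewrite in_setD1 eq_sym (uv_w2 cyc) inE.
  rewrite (cycle_edges_F (_ : cycle (adj_of F) _) (w2_in cyc)); last first.
    by case/andP: cyc => /andP[].
  apply/cbP; exists (x :: s1 ++ y :: v :: s2'); split=> //; exact: w2_in cyc.
have sub : cycset (xy |: F :\ uv) \subset xy |: ((cycset F :\ uv) :\ w2).
  apply/subsetP => E; rewrite inE => /andP[EF /cbP[D [cyD ED]]].
  case: (cyc_bound cp cyc cyD ED) => [->|[[D' [cyD' ED']] n1 n2]].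
    exact: setU11.
  apply: setU1r; rewrite !in_setD1 n1 n2 inE /=.
  have -> : E \in F.
    by apply: (cycle_edges_F _ ED'); case/andP: cyD' => /andP[].
  by apply/cbP; exists D'.
have := subset_leq_card sub.
rewrite cardsU1 (cardsD1 uv (cycset F)) uvc (cardsD1 w2 (cycset F :\ uv)) w2c.
move=> h; apply: leq_ltn_trans h _.
by case: (xy \notin _); rewrite /= ?add1n ?add0n ltnS ?leqnSn // ltnW.
Qed.

End Main.


Lemma adj_edge (T : finType) (e : rel T) F p q : symmetric e -> edge_subset e F ->
  adj_of F p q -> e p q.
Proof.
move=> sym es /andP[_ /es [a [b [eab E]]]].
by case/set2_eq: E => -[-> ->] //; rewrite sym.
Qed.

Unset Implicit Arguments.

Theorem mainTheorem9 (T : finType) (e : rel T) :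
  simple_graph e -> graph_connected e -> chordal e ->
  exists F : {set {set T}},
    [/\ spanning_cactus e F,
        (forall F' : {set {set T}}, spanning_cactus e F' -> #|F'| <= #|F|) &
        (forall c, is_cycle (adj_of F) c -> size c = 3)].
Proof.
move=> [irr sym] conn chord.
pose EG := [set A : {set T} | [exists x, exists y, e x y && (A == [set x; y])]].
have esEG : edge_subset e EG.
  move=> A; rewrite inE => /existsP[x /existsP[y /andP[exy /eqP ->]]].
  by exists x, y.
have connEG : graph_connected (adj_of EG).
  move=> x y; apply: connect_sub (conn x y) => p q epq; apply: connect1.
  rewrite /adj_of; apply/andP; split.
    by apply: contraTneq epq => ->; rewrite irr.
  by rewrite inE; apply/existsP; exists p; apply/existsP; exists q; rewrite epq eqxx.
pose P0 := fun F : {set {set T}} => cb (edge_subset e F /\ graph_connected (adj_of F)).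
have P0EG : P0 EG by apply/cbP.
case: (arg_minnP (fun F : {set {set T}} => #|F|) P0EG) => F0 /cbP[es0 conn0] min0.
have sc0 : spanning_cactus e F0.
  split=> //; split=> // A c1 c2 cy1.
  exfalso; case/andP: cy1 => /andP[cc1 uc1] sz1.
  case: c1 cc1 uc1 sz1 => [|a [|h t]] // cc1 uc1 sz1.
  have tn : t != [::] by case: (t) sz1.
  have conn' := conn_remove conn0 uc1 cc1 tn.
  have inF : [set a; h] \in F0 by move: cc1 => /= /andP[/andP[_ ->]].
  have : P0 (F0 :\ [set a; h]).
    apply/cbP; split=> // B; rewrite in_setD1 => /andP[_ /es0] //.
  move/min0; rewrite (cardsD1 [set a; h] F0) inF.
  by rewrite add1n ltnn.
pose P1 := fun F : {set {set T}} => cb (spanning_cactus e F).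
have P1F0 : P1 F0 by apply/cbP.
case: (arg_maxnP (fun F : {set {set T}} => #|F|) P1F0) => F1 /cbP sc1 max1.
pose P2 := fun F : {set {set T}} => cb (spanning_cactus e F) && (#|F| == #|F1|).
have P2F1 : P2 F1 by rewrite /P2 eqxx andbT; apply/cbP.
case: (arg_minnP (fun F : {set {set T}} => #|cycset F|) P2F1) => F2 /andP[/cbP sc2 /eqP c21] min2.
exists F2; split=> //.
  by move=> F' scF'; rewrite c21; apply: max1; apply/cbP.
move=> c cyc; apply/eqP; apply/negPn/negP => n3.
have /andP[/andP[cc uc] sz] := cyc.
have sz4 : 3 < size c by rewrite ltn_neqAle eq_sym n3 sz.
have cyce : is_cycle e c.
  rewrite /is_cycle /ucycleb uc sz !andbT.
  by apply: sub_cycle cc => p q; apply: adj_edge (proj1 sc2).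
have : ~~ [forall x, forall y,
   (x \in c) ==> (y \in c) ==> e x y ==> ((y == next c x) || (x == next c y))].
  apply/negP => /forallP H.
  have : induced_cycle e c.
    split=> // x y xc yc exy.
    by have /forallP/(_ y) := H x; rewrite xc yc exy.
  by move/chord; rewrite leqNgt sz4.
rewrite negb_forall => /existsP[x]; rewrite negb_forall => /existsP[y].
rewrite !negb_imply negb_or => /and4P[xc yc exy /andP[nyx nxy]].
have xy : x != y by apply: contraTneq exy => ->; rewrite irr.
case/rot_to: (xc) => i t ct.
have ucr : uniq (x :: t) by rewrite -ct rot_uniq.
have nr : forall z, next (x :: t) z = next c z by move=> z; rewrite -ct next_rot.
have yt : y \in t by move: yc; rewrite -(mem_rot i) ct inE eq_sym (negPf xy).
move: ct ucr nr; case/splitPr: yt => s1 s2 ct ucr nr.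
case: s2 ct ucr nr => [|v s2'] ct ucr nr.
  move: nxy; rewrite -nr.
  have h := next_lastE ucr; rewrite cats1 last_rcons in h.
  by rewrite cats1 h eqxx.
have s1n : s1 != [::].
  apply: contraNneq nyx => s1e; by rewrite -nr s1e cat0s next_head.
have cyc' : is_cycle (adj_of F2) (x :: s1 ++ [:: y, v & s2']).
  by rewrite -ct is_cycle_rot.
have [F' [scF' cF' lt]] := exchange sc2 exy cyc' s1n.
have : P2 F' by rewrite /P2 cF' c21 eqxx andbT; apply/cbP.
by move/min2; rewrite leqNgt lt.
Qed.
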